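(* Let $S$ be an AG-groupoid with a left identity. Every bi-ideal of $S$ is prime if and only if every bi-ideal of $S$ is idempotent and the set of bi-ideals of $S$ is totally ordered under inclusion (for any bi-ideals $I,J$, either $I\subseteq J$ or $J\subseteq I$).
   Context: An AG-groupoid is a set $S$ with a binary operation satisfying $(ab)c=(cb)a$ for all $a,b,c\in S$. A left identity is an element $e$ with $ea=a$ for all $a\in S$. For nonempty subsets, $AB=\{ab:a\in A,b\in B\}$, $B^{2}=BB$. A bi-ideal of $S$ is a nonempty subset $B$ with $BB\subseteq B$ and $(BS)B\subseteq B$; it is idempotent if $B^{2}=B$. A bi-ideal $B$ is prime if for all bi-ideals $B_{1},B_{2}$ of $S$, $B_{1}B_{2}\subseteq B$ implies $B_{1}\subseteq B$ or $B_{2}\subseteq B$. *)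

(* Defs.v *)
Set Implicit Arguments.

Definition subset {S : Type} (A B : S -> Prop) : Prop := forall x, A x -> B x.

Definition setmul {S : Type} (op : S -> S -> S) (A B : S -> Prop) : S -> Prop :=
  fun z => exists a b, A a /\ B b /\ z = op a b.

Definition setT {S : Type} : S -> Prop := fun _ => True.

Definition nonempty {S : Type} (A : S -> Prop) : Prop := exists x, A x.

Definition AG_groupoid {S : Type} (op : S -> S -> S) : Prop :=
  forall a b c, op (op a b) c = op (op c b) a.

Definition left_identity {S : Type} (op : S -> S -> S) (e : S) : Prop :=
  forall a, op e a = a.

Definition bi_ideal {S : Type} (op : S -> S -> S) (B : S -> Prop) : Prop :=
  nonempty B /\ subset (setmul op B B) B /\
  subset (setmul op (setmul op B setT) B) B.

Definition idempotent_set {S : Type} (op : S -> S -> S) (B : S -> Prop) : Prop :=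
  subset (setmul op B B) B /\ subset B (setmul op B B).

Definition prime_bi_ideal {S : Type} (op : S -> S -> S) (B : S -> Prop) : Prop :=
  bi_ideal op B /\
  forall B1 B2, bi_ideal op B1 -> bi_ideal op B2 ->
    subset (setmul op B1 B2) B -> subset B1 B \/ subset B2 B.

(* Main.v *)
Require Import Defs.

Section AG.
Variable (S : Type) (op : S -> S -> S) (e : S).
Hypothesis HAG : AG_groupoid op.
Hypothesis He : left_identity op e.

Lemma medial a b c d : op (op a b) (op c d) = op (op a c) (op b d).
Proof. rewrite HAG. rewrite (HAG c d b). rewrite HAG. reflexivity. Qed.

Lemma lswap a b c : op a (op b c) = op b (op a c).
Proof. replace (op a (op b c)) with (op (op e a) (op b c)) by (rewrite He; reflexivity).
  rewrite medial. rewrite He. reflexivity. Qed.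

Lemma paramedial a b c d : op (op a b) (op c d) = op (op d b) (op c a).
Proof.
  rewrite medial. rewrite lswap. rewrite HAG. rewrite <- lswap.
  rewrite medial. reflexivity.
Qed.

Lemma sq_bi B : bi_ideal op B -> bi_ideal op (setmul op B B).
Proof.
  intros [[b Hb] [H1 H2]]. split; [|split].
  - exists (op b b). exists b, b. auto.
  - intros x [y [z [[a1 [a2 [Ha1 [Ha2 ->]]]] [[a3 [a4 [Ha3 [Ha4 ->]]]] ->]]]].
    rewrite medial. exists (op a1 a3), (op a2 a4). repeat split.
    + apply H1. exists a1, a3. auto.
    + apply H1. exists a2, a4. auto.
  - intros x [y [z [[w [s [[a1 [a2 [Ha1 [Ha2 ->]]]] [_ ->]]]] [[a3 [a4 [Ha3 [Ha4 ->]]]] ->]]]].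
    rewrite lswap. exists a3, (op (op (op a1 a2) s) a4). repeat split; auto.
    apply H2. exists (op (op a1 a2) s), a4. repeat split; auto.
    exists (op a1 a2), s. repeat split; auto. apply H1. exists a1, a2; auto.
Qed.

Lemma prod_bi I J : bi_ideal op I -> bi_ideal op J -> bi_ideal op (setmul op I J).
Proof.
  intros [[i Hi] [I1 I2]] [[j Hj] [J1 J2]]. split; [|split].
  - exists (op i j). exists i, j. auto.
  - intros x [y [z [[a1 [a2 [Ha1 [Ha2 ->]]]] [[a3 [a4 [Ha3 [Ha4 ->]]]] ->]]]].
    rewrite medial. exists (op a1 a3), (op a2 a4). repeat split.
    + apply I1. exists a1, a3. auto.
    + apply J1. exists a2, a4. auto.
  - intros x [y [z [[w [s [[a1 [a2 [Ha1 [Ha2 ->]]]] [_ ->]]]] [[a3 [a4 [Ha3 [Ha4 ->]]]] ->]]]].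
    rewrite (HAG a1 a2 s). rewrite paramedial. rewrite (HAG a4 a1).
    exists (op (op a3 (op s a2)) a1), a4. repeat split; auto.
    apply I2. exists (op a3 (op s a2)), a1. repeat split; auto.
    all: unfold setT; auto.
    exists a3, (op s a2). repeat split; auto.
    all: unfold setT; auto.
Qed.

End AG.


Theorem theorem1 (S : Type) (op : S -> S -> S) (e : S)
  (HAG : AG_groupoid op) (He : left_identity op e) :
  (forall B, bi_ideal op B -> prime_bi_ideal op B) <->
  ((forall B, bi_ideal op B -> idempotent_set op B) /\
   (forall I J, bi_ideal op I -> bi_ideal op J -> subset I J \/ subset J I)).
Proof.
  split.
  - intros HP.
    assert (Hid : forall B, bi_ideal op B -> idempotent_set op B).
    { intros B HB. split; [apply HB|].
      pose proof (sq_bi _ _ _ HAG He _ HB) as HK.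
      destruct (HP _ HK) as [_ HPr].
      destruct (HPr B B HB HB (fun x H => H)); auto. }
    split; [exact Hid|].
    intros I J HI HJ.
    assert (Hc : subset (setmul op I J) (setmul op J I)).
    { intros x [a [b [Ha [Hb ->]]]].
      destruct (Hid I HI) as [_ HI2]. destruct (Hid J HJ) as [_ HJ2].
      destruct (HI2 a Ha) as [a1 [a2 [Ha1 [Ha2 ->]]]].
      destruct (HJ2 b Hb) as [b1 [b2 [Hb1 [Hb2 ->]]]].
      rewrite (paramedial _ _ _ HAG He). rewrite (medial _ _ HAG).
      exists (op b2 b1), (op a2 a1). repeat split.
      - apply (proj1 (proj2 HJ)). exists b2, b1. auto.
      - apply (proj1 (proj2 HI)). exists a2, a1. auto. }
    destruct (HP _ (prod_bi _ _ _ HAG He _ _ HI HJ)) as [_ HPr].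
    destruct (HPr I J HI HJ (fun x H => H)) as [H1|H1].
    + left. intros x Hx. apply H1 in Hx.
      destruct Hx as [a [b [Ha [Hb ->]]]].
      destruct (Hc a (H1 a Ha)) as [c [d [Hc1 [Hd ->]]]].
      apply (proj2 (proj2 HJ)). exists (op c d), b. repeat split; auto. exists c, d. unfold setT; auto.
    + right. intros x Hx. apply H1 in Hx. apply Hc in Hx.
      destruct Hx as [a [b [Ha [Hb ->]]]].
      destruct (H1 a Ha) as [c [d [Hc1 [Hd ->]]]].
      apply (proj2 (proj2 HI)). exists (op c d), b. repeat split; auto. exists c, d. unfold setT; auto.
  - intros [Hid Htot] B HB. split; [exact HB|].
    intros B1 B2 H1 H2 Hsub.
    destruct (Htot B1 B2 H1 H2) as [H|H].
    + left. intros x Hx. destruct (Hid B1 H1) as [_ Hq].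
      destruct (Hq x Hx) as [a [b [Ha [Hb ->]]]].
      apply Hsub. exists a, b. auto.
    + right. intros x Hx. destruct (Hid B2 H2) as [_ Hq].
      destruct (Hq x Hx) as [a [b [Ha [Hb ->]]]].
      apply Hsub. exists a, b. auto.
Qed.
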